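(* Let $p_*$ be a probability density on $\mathbb{R}^d$, let $L>0$, and set $S=\frac12\log\frac{2L+1}{2L}$. Let $K\in\mathbb{N}_+$, let $\eta>0$ be such that $R=S/\eta$ is a positive integer, and consider the Ornstein–Uhlenbeck process $\mathrm{d}\mathbf{x}_t=-\mathbf{x}_t\,\mathrm{d}t+\sqrt{2}\,\mathrm{d}B_t$, $\mathbf{x}_0\sim p_*$, with $p_{k,t}$ the density of $\mathbf{x}_{kS+t}$. Assume that for every $k\in\{0,\dots,K-1\}$ and $t\in[0,S]$, $\nabla\log p_{k,t}$ is $L$-Lipschitz. For $k\in\{0,\dots,K-1\}$, $r\in\{0,\dots,R-1\}$ and $\mathbf{x}\in\mathbb{R}^d$ define the density $$q_{k,S-r\eta}(\mathbf{x}'|\mathbf{x})\propto\exp\Big(\log p_{k,0}(\mathbf{x}')-\frac{\|\mathbf{x}-e^{-(S-r\eta)}\mathbf{x}'\|^2}{2(1-e^{-2(S-r\eta)})}\Big),$$ and set $\mu_r=\frac12\cdot\frac{e^{-2(S-r\eta)}}{1-e^{-2(S-r\eta)}}$, $L_r=\frac32\cdot\frac{e^{-2(S-r\eta)}}{1-e^{-2(S-r\eta)}}$. Then $\mu_r I\preceq-\nabla^2_{\mathbf{x}'}\log q_{k,S-r\eta}(\mathbf{x}'|\mathbf{x})\preceq L_r I$. *)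

(* Defs.v *)
From HB Require Import structures.
From mathcomp Require Import all_boot all_order all_algebra.
From mathcomp Require Import all_classical all_reals all_analysis.
Set Implicit Arguments. Unset Strict Implicit. Unset Printing Implicit Defensive.
Import Order.TTheory GRing.Theory Num.Theory.
Import numFieldNormedType.Exports.
Local Open Scope classical_set_scope.
Local Open Scope ring_scope.

Section Defs.
Variable R : realType.

Definition vec_of_tuple (d : nat) (t : d.-tuple R) : 'rV[R]_d :=
  \row_i tnth t i.

(* Lebesgue integral over R^n of a (nonnegative, measurable) function,
   computed as an iterated integral of 1-dimensional Lebesgue integrals
   (equal to the integral against the n-fold product Lebesgue measure
   by Tonelli's theorem). *)
Fixpoint iint (n : nat) : (n.-tuple R -> \bar R) -> \bar R :=
  match n return (n.-tuple R -> \bar R) -> \bar R with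
  | 0 => fun f => f [tuple]
  | n'.+1 => fun f =>
      (\int[@lebesgue_measure R]_(x in [set: R])
         iint (fun t : n'.-tuple R => f [tuple of x :: t]))%E
  end.

Definition integral_Rd (d : nat) (f : 'rV[R]_d -> \bar R) : \bar R :=
  iint (fun t : d.-tuple R => f (vec_of_tuple t)).

Definition enorm2 (d : nat) (v : 'rV[R]_d) : R := \sum_i (v 0 i) ^+ 2.
Definition enorm (d : nat) (v : 'rV[R]_d) : R := Num.sqrt (enorm2 v).

Definition is_prob_density (d : nat) (p : 'rV[R]_d -> R) : Prop :=
  [/\ forall x, 0 <= p x,
      measurable_fun [set: d.-tuple R] (fun t => p (vec_of_tuple t)) &
      integral_Rd (fun x => (p x)%:E) = 1%E].

Definition gauss_density (d : nat) (s2 : R) (z : 'rV[R]_d) : R :=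
  (2 * pi * s2) `^ (- (d%:R / 2)) * expR (- enorm2 z / (2 * s2)).

(* Density of x_s, where dx_t = -x_t dt + sqrt 2 dB_t and x_0 ~ p.
   Since x_s = e^{-s} x_0 + sqrt(1 - e^{-2s}) Z with Z ~ N(0,I) independent
   of x_0, this density is the following convolution (for s > 0). *)
Definition ou_density (d : nat) (p : 'rV[R]_d -> R) (s : R) (y : 'rV[R]_d) : R :=
  if s == 0 then p y else
  fine (integral_Rd (fun x =>
          (p x * gauss_density (1 - expR (- (2 * s))) (y - expR (- s) *: x))%:E)).

Definition evec (d : nat) (i : 'I_d) : 'rV[R]_d := delta_mx 0 i.

Definition grad (d : nat) (f : 'rV[R]_d -> R) (x : 'rV[R]_d) : 'rV[R]_d :=
  \row_i derive f x (evec i).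

Definition hessian (d : nat) (f : 'rV[R]_d -> R) (x : 'rV[R]_d) : 'M[R]_d :=
  \matrix_(i, j) derive (fun y => derive f y (evec j)) x (evec i).

Definition quad_form (d : nat) (A : 'M[R]_d) (v : 'rV[R]_d) : R :=
  \sum_i \sum_j v 0 i * A i j * v 0 j.

Definition loewner_le (d : nat) (A B : 'M[R]_d) : Prop :=
  forall v : 'rV[R]_d, quad_form A v <= quad_form B v.

Definition grad_log_lipschitz (d : nat) (f : 'rV[R]_d -> R) (L : R) : Prop :=
  (forall x, 0 < f x) /\
  (forall x, differentiable (fun y => ln (f y)) x) /\
  (forall x y, enorm (grad (fun z => ln (f z)) x - grad (fun z => ln (f z)) y)
                 <= L * enorm (x - y)).

Definition q_unnorm (d : nat) (p0 : 'rV[R]_d -> R) (tau : R)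
    (x x' : 'rV[R]_d) : R :=
  expR (ln (p0 x') - enorm2 (x - expR (- tau) *: x') / (2 * (1 - expR (- (2 * tau))))).

Definition q_cond (d : nat) (p0 : 'rV[R]_d -> R) (tau : R)
    (x x' : 'rV[R]_d) : R :=
  q_unnorm p0 tau x x' / fine (integral_Rd (fun y => (q_unnorm p0 tau x y)%:E)).

End Defs.

(* Main.v *)
Require Import Defs.
From HB Require Import structures.
From mathcomp Require Import all_boot all_order all_algebra.
From mathcomp Require Import all_classical all_reals all_analysis.
From mathcomp Require Import ring lra.
Import Order.TTheory GRing.Theory Num.Theory.
Import numFieldNormedType.Exports.
Local Open Scope ring_scope.
Set Implicit Arguments. Unset Strict Implicit. Unset Printing Implicit Defensive.
Section IntPart.
Variable R : realType.
Local Open Scope ereal_scope.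

Lemma int_le_nonmeas (f g : R -> \bar R) : (forall x, 0 <= f x) -> (forall x, f x <= g x) ->
  \int[@lebesgue_measure R]_(x in [set: R]) f x <= \int[@lebesgue_measure R]_(x in [set: R]) g x.
Proof.
move=> f0 fg; have g0 : forall x, 0 <= g x by move=> x; exact: le_trans (f0 x) (fg x).
rewrite !ge0_integralTE//; apply: ereal_sup_le => _ [h hf <-]; exists h => // x.
exact: le_trans (hf x) (fg x).
Qed.

Lemma iint_ge0 n (f : n.-tuple R -> \bar R) : (forall t, 0 <= f t) -> 0 <= iint f.
Proof.
elim: n f => [|n IH] f f0 /=; first exact: f0.
by apply: integral_ge0 => x _; apply: IH => t; exact: f0.
Qed.

Lemma iint_le n (f g : n.-tuple R -> \bar R) : (forall t, 0 <= f t) ->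
  (forall t, f t <= g t) -> iint f <= iint g.
Proof.
elim: n f g => [|n IH] f g f0 fg /=; first exact: fg.
apply: int_le_nonmeas => x; first by apply: iint_ge0 => t; exact: f0.
by apply: IH => t; [exact: f0|exact: fg].
Qed.

Lemma iint_prod n (s C : R) :
  iint (fun t : n.-tuple R => (C * \prod_(y <- t) normal_pdf 0 s y)%:E) = C%:E.
Proof.
elim: n C => [|n IH] C /=; first by rewrite big_nil mulr1.
transitivity (\int[@lebesgue_measure R]_(x in [set: R]) (C%:E * (normal_pdf 0 s x)%:E)).
  apply: eq_integral => x _; rewrite -EFinM -IH; congr iint; apply: funext => t.
  by rewrite big_cons mulrA.
by rewrite integralZl//= ?integral_normal_pdf ?mule1//; exact: integrable_normal_pdf.
Qed.

Lemma iint_lb n (f : n.-tuple R -> \bar R) (c del : R) : (0 <= c)%R -> (0 < del)%R ->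
  (forall t, 0 <= f t) ->
  (forall t : n.-tuple R, (forall i, `|tnth t i| <= del)%R -> c%:E <= f t) ->
  (c * (2 * del) ^+ n)%:E <= iint f.
Proof.
move=> c0 d0; elim: n f => [|n IH] f f0 fb /=.
  by rewrite expr0 mulr1; apply: fb => -[].
have cd0 : (0 <= c * (2 * del) ^+ n)%R by rewrite mulr_ge0// exprn_ge0// mulr_ge0// ltW.
apply: (@le_trans _ _ (\int[@lebesgue_measure R]_(x in [set: R])
   ((c * (2 * del) ^+ n) * \1_(`[(- del)%R, del]%classic : set R) x)%:E)).
  have H := @integralZl_indic _ _ _ (@lebesgue_measure R) setT measurableT
    (fun=> `[(- del)%R, del]%classic) (c * (2 * del) ^+ n)%R.
  rewrite /= in H; rewrite H //; last first.
    by rewrite ltNge cd0.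
  rewrite integral_indic//= setIT lebesgue_measure_itv/= lte_fin gtrN//.
  rewrite -EFinD -EFinM lee_fin opprK exprS le_eqVlt; apply/orP; left; apply/eqP.
  ring.
apply: int_le_nonmeas => x.
  by rewrite lee_fin mulr_ge0// indicE.
rewrite indicE; case: (boolP (x \in _)) => xin; last first.
  by rewrite mulr0; apply: iint_ge0 => t; exact: f0.
rewrite mulr1; apply: IH => [t|t tb]; first exact: f0.
apply: fb => i; case: (unliftP ord0 i) => [j ->|->].
  by rewrite tnthS.
rewrite tnth0; move: xin; rewrite inE/= in_itv/= ler_norml; by [].
Qed.

End IntPart.
Section AnaPart.
Variable R : realType.

Lemma enorm2_ge0 n (u : 'rV[R]_n) : 0 <= enorm2 u.
Proof. by apply: sumr_ge0 => i _; exact: sqr_ge0. Qed.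

Lemma enorm_ge0 n (u : 'rV[R]_n) : 0 <= enorm u.
Proof. exact: sqrtr_ge0. Qed.

Lemma enorm_sq n (u : 'rV[R]_n) : enorm u ^+ 2 = enorm2 u.
Proof. by rewrite /enorm sqr_sqrtr// enorm2_ge0. Qed.

Lemma enorm2Z n (a : R) (u : 'rV[R]_n) : enorm2 (a *: u) = a ^+ 2 * enorm2 u.
Proof. by rewrite /enorm2 mulr_sumr; apply: eq_bigr => i _; rewrite mxE exprMn. Qed.

Lemma enormZ n (a : R) (u : 'rV[R]_n) : enorm (a *: u) = `|a| * enorm u.
Proof. by rewrite /enorm enorm2Z sqrtrM ?sqr_ge0// sqrtr_sqr. Qed.

Lemma enormN n (u : 'rV[R]_n) : enorm (- u) = enorm u.
Proof. by rewrite -scaleN1r enormZ normrN normr1 mul1r. Qed.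

Lemma dot_le n (u D : 'rV[R]_n) (M : R) : 0 < M -> enorm D <= M * enorm u ->
  \sum_i u 0 i * D 0 i <= M * enorm2 u.
Proof.
move=> M0 hD.
have e2 : enorm2 D <= M ^+ 2 * enorm2 u.
  have h0 := enorm_ge0 D.
  have := ler_pM h0 h0 hD hD.
  by rewrite -!expr2 enorm_sq exprMn enorm_sq.
have key : \sum_i (2 * M) * (u 0 i * D 0 i) <=
    \sum_i (M ^+ 2 * (u 0 i) ^+ 2 + (D 0 i) ^+ 2).
  apply: ler_sum => i _.
  by rewrite -subr_ge0 (_ : _ - _ = (M * u 0 i - D 0 i) ^+ 2) ?sqr_ge0 //; ring.
rewrite -mulr_sumr big_split /= -mulr_sumr in key.
rewrite /enorm2 in e2 *.
set S := \sum_i _ in key *.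
set E := \sum_i (u 0 i) ^+ 2 in key e2 *.
set F := \sum_i (D 0 i) ^+ 2 in key e2.
nra.
Qed.

Lemma dot_abs n (u D : 'rV[R]_n) (M : R) : 0 < M -> enorm D <= M * enorm u ->
  `|\sum_i u 0 i * D 0 i| <= M * enorm2 u.
Proof.
move=> M0 hD; rewrite ler_norml dot_le// andbT.
have := @dot_le n u (- D) M M0; rewrite enormN => /(_ hD).
under eq_bigr do rewrite mxE mulrN.
by rewrite sumrN lerNl.
Qed.

Lemma grad_dot n (f : 'rV[R]_n -> R) z w : differentiable f z ->
  derive f z w = \sum_i w 0 i * grad f z 0 i.
Proof.
move=> df; rewrite deriveE // {1}(row_sum_delta w) linear_sum.
apply: eq_bigr => i _; rewrite linearZ /= -deriveE // mxE.
by [].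
Qed.

Lemma restr_derive n (f : 'rV[R]_n -> R) (y : 'rV[R]_n) (s : R) :
  differentiable f (s *: y) ->
  is_derive s 1 (fun s => f (s *: y)) (derive f (s *: y) y).
Proof.
move=> df.
have eqq : (fun h : R => h^-1 *: (((fun s => f (s *: y)) \o shift s) (h *: 1) - f (s *: y)))
   = (fun h : R => h^-1 *: ((f \o shift (s *: y)) (h *: y) - f (s *: y))).
  by apply: funext => h; rewrite /= scalerDl [h *: 1]mulr1.
apply: DeriveDef; first by rewrite /derivable eqq; exact: diff_derivable.
by rewrite /derive eqq.
Qed.

End AnaPart.
Section LogBound.
Variable R : realType.

Lemma log_bound n (f : 'rV[R]_n -> R) L : 0 < L -> (forall z, differentiable f z) ->
  (forall z w, enorm (grad f z - grad f w) <= L * enorm (z - w)) ->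
  forall y, `|f y - f 0 - \sum_i y 0 i * grad f 0 0 i| <= 3 / 4 * L * enorm2 y.
Proof.
move=> L0 df lip y.
pose g (s : R) := f (s *: y).
pose D (s : R) := \sum_i y 0 i * grad f (s *: y) 0 i.
have gd (s : R) : is_derive s (1 : R) g (D s).
  by rewrite /D -grad_dot//; exact: restr_derive.
have Db (s : R) : 0 < s -> `|D s - D 0| <= L * s * enorm2 y.
  move=> s0.
  have -> : D s - D 0 = \sum_i y 0 i * (grad f (s *: y) - grad f (0 *: y)) 0 i.
    by rewrite /D -sumrB; apply: eq_bigr => i _; rewrite !mxE mulrBr.
  apply: dot_abs; first exact: mulr_gt0.
  apply: (le_trans (lip _ _)).
  by rewrite scale0r subr0 enormZ gtr0_norm// mulrA.
have gc (a b : R) : {within `[a, b], continuous g}%classic.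
  by apply: derivable_within_continuous => x _; by case: (gd x).
have [c1 c1in E1] := MVT (a := 0) (b := 1 / 2) ltac:(lra) (fun x _ => gd x) (gc _ _).
have [c2 c2in E2] := MVT (a := 1 / 2) (b := 1) ltac:(lra) (fun x _ => gd x) (gc _ _).
move: c1in c2in; rewrite !in_itv /= => /andP[c1a c1b] /andP[c2a c2b].
have B1 := Db c1 c1a.
have B2 := Db c2 ltac:(lra).
have g1 : g 1 = f y by rewrite /g scale1r.
have g0 : g 0 = f 0 by rewrite /g scale0r.
have D0 : D 0 = \sum_i y 0 i * grad f 0 0 i by rewrite /D scale0r.
rewrite -g1 -g0 -D0.
have e0 := enorm2_ge0 y.
have h1 : L * c1 * enorm2 y <= L * (1/2) * enorm2 y.
  by rewrite ler_wpM2r// ler_wpM2l// ltW.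
have h2 : L * c2 * enorm2 y <= L * 1 * enorm2 y.
  by rewrite ler_wpM2r// ler_wpM2l// ltW.
move: B1 B2; rewrite !ler_norml => /andP[B1 B1'] /andP[B2 B2'].
apply/andP; split.
  have -> : g 1 - g 0 - D 0 = (g (1/2) - g 0) + (g 1 - g (1/2)) - D 0 by ring.
  rewrite E1 E2.
  lra.
have -> : g 1 - g 0 - D 0 = (g (1/2) - g 0) + (g 1 - g (1/2)) - D 0 by ring.
rewrite E1 E2.
lra.
Qed.
End LogBound.
Section QuadPart.
Variable R : realType.

Lemma quot_affine (q : R -> R) (A B : R) :
  (forall h, h != 0 -> q h = A + B * h) -> (q h @[h --> 0^'] --> A)%classic.
Proof.
move=> qE.
apply: (@cvg_trans _ ((fun h => A + B * h) @ 0^')%classic).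
  apply: near_eq_cvg; near=> h; rewrite qE //.
  near: h; exact: nbhs_dnbhs_neq.
apply: cvg_within_filter.
have H1 : ((fun=> A) @ (nbhs (0:R)) --> A)%classic by exact: cvg_cst.
have H2 : ((fun h : R => B * h) @ (nbhs (0:R)) --> B * 0)%classic.
  by apply: cvgMr; exact: cvg_id.
have := cvgD H1 H2; rewrite mulr0 addr0; exact.
Unshelve. all: by end_near.
Qed.

Lemma quad_derive n (x : 'rV[R]_n) (a b : R) (y : 'rV[R]_n) (j : 'I_n) :
  is_derive y ((@evec R n j)) (fun y => enorm2 (x - a *: y) / b)
    (- 2 * a * (x - a *: y) 0 j / b).
Proof.
set w := x - a *: y.
have qE : forall h : R, h != 0 ->
   h^-1 *: (((fun y => enorm2 (x - a *: y) / b) \o shift y) (h *: (@evec R n j))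
     - enorm2 (x - a *: y) / b) = - 2 * a * w 0 j / b + (a ^+ 2 / b) * h.
  move=> h h0 /=.
  rewrite -mulrBl.
  have -> : enorm2 (x - a *: (h *: (@evec R n j) + y)) - enorm2 (x - a *: y) =
      (w 0 j - a * h) ^+ 2 - (w 0 j) ^+ 2.
    rewrite /enorm2 -sumrB (bigD1 j) //= big1 ?addr0 => [|i ij].
      by rewrite /w !mxE !eqxx /= mulr1; ring.
    by rewrite /w !mxE (negbTE ij) /=; ring.
  rewrite /w.
  have -> : (x - a *: y) 0 j = x 0 j - a * y 0 j by rewrite !mxE.
  change (h^-1 * (((x 0 j - a * y 0 j - a * h) ^+ 2 - (x 0 j - a * y 0 j) ^+ 2) / b) = -2 * a * (x 0 j - a * y 0 j) / b + a ^+ 2 / b * h).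
  have [->|b0] := eqVneq b 0; first by rewrite !invr0 !mulr0 mul0r addr0.
  by field; rewrite b0 h0.
apply: DeriveDef.
  by apply/cvg_ex; exists (- 2 * a * w 0 j / b); exact: quot_affine qE.
by apply: cvg_lim => //; exact: quot_affine qE.
Qed.

End QuadPart.
Section HessPart.
Variable R : realType.

Lemma cvg_sumR (I : finType) (T : Type) (F : set_system T) (FF : Filter F)
  (f : I -> T -> R) (l : I -> R) :
  (forall i, (f i x @[x --> F] --> l i)%classic) ->
  ((\sum_i f i x) @[x --> F] --> \sum_i l i)%classic.
Proof.
move=> H.
exact: (@cvg_big R I +%R 0 predT (@add_continuous R) T F (index_enum I) f l FF (fun i _ => H i)).
Qed.

Lemma hess_quad n (h : 'rV[R]_n -> R) (x' v : 'rV[R]_n) :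
  differentiable (grad h) x' ->
  ((fun t : R => \sum_j v 0 j * (t^-1 * (grad h (t *: v + x') 0 j - grad h x' 0 j)))
     @ (0:R)^' --> quad_form (hessian h x') v)%classic.
Proof.
move=> dF.
set F := grad h.
have cF w : ((fun t : R => t^-1 *: (F (t *: w + x') - F x')) @ (0:R)^' --> derive F x' w)%classic.
  exact: (diff_derivable (v := w) dF).
have cFj w j : ((fun t : R => t^-1 * (F (t *: w + x') 0 j - F x' 0 j)) @ (0:R)^'
    --> derive F x' w 0 j)%classic.
  have E : (fun t : R => t^-1 * (F (t *: w + x') 0 j - F x' 0 j)) =
    (fun M : 'rV[R]_n => M 0 j) \o (fun t : R => t^-1 *: (F (t *: w + x') - F x')).
    by apply: funext => t /=; rewrite !mxE.
  rewrite E; exact: (continuous_cvg _ (@coord_continuous R 1 n 0 j _) (cF w)).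
have Hij i j : hessian h x' i j = derive F x' (@evec R n i) 0 j.
  rewrite /hessian mxE.
  have -> : (fun y => derive h y (@evec R n j)) = (fun y => F y 0 j).
    by apply: funext => y; rewrite /F /grad mxE.
  exact: (cvg_lim _ (cFj (@evec R n i) j)).
have DFv : derive F x' v = \sum_i v 0 i *: derive F x' (@evec R n i).
  rewrite deriveE // {1}(row_sum_delta v) linear_sum; apply: eq_bigr => i _.
  by rewrite linearZ -deriveE.
have -> : quad_form (hessian h x') v = \sum_j v 0 j * derive F x' v 0 j.
  rewrite /quad_form exchange_big /=; apply: eq_bigr => j _.
  rewrite DFv summxE mulr_sumr; apply: eq_bigr => i _.
  by rewrite Hij mxE; ring.
apply: cvg_sumR => j.
by apply: cvgMr; exact: cFj.
Qed.

End HessPart.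
Section ZPart.
Variable R : realType.

Lemma per_ub (B Y X a u L : R) : 0 < u -> 0 < L -> L <= a ^+ 2 * u ->
  B * Y + 3 / 4 * L * Y ^+ 2 - (X - a * Y) ^+ 2 * u <=
  4 * B ^+ 2 / L + 7 * X ^+ 2 * u - L / 16 * Y ^+ 2.
Proof.
move=> u0 L0 aL.
have F1 : 0 <= u * (8 * X - a * Y) ^+ 2 by rewrite mulr_ge0 ?sqr_ge0 ?ltW.
have F2 : 0 <= (a ^+ 2 * u - L) * Y ^+ 2 by rewrite mulr_ge0 ?sqr_ge0 ?subr_ge0.
have F3 : 0 <= 4 * B ^+ 2 / L - B * Y + L / 16 * Y ^+ 2.
  have m0 : 0 <= L^-1 by rewrite invr_ge0 ltW.
  have E : 4 * B ^+ 2 / L - B * Y + L / 16 * Y ^+ 2 = L^-1 * (2 * B - L * Y / 4) ^+ 2.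
    by field; rewrite gt_eqF.
  by rewrite E; exact: mulr_ge0 m0 (sqr_ge0 _).
nra.
Qed.

Lemma per_lb (B Y X a u L : R) : 0 < u -> 0 < L -> `|Y| <= 1 ->
  - (B ^+ 2 + 1) / 2 - 3 / 4 * L - (2 * X ^+ 2 + 2 * a ^+ 2) * u <=
  B * Y - 3 / 4 * L * Y ^+ 2 - (X - a * Y) ^+ 2 * u.
Proof.
move=> u0 L0; rewrite ler_norml => /andP[y1 y2].
have Y2 : Y ^+ 2 <= 1 by nra.
have F1 : 0 <= (B + Y) ^+ 2 by exact: sqr_ge0.
have F2 : 0 <= L * (1 - Y ^+ 2) by apply: mulr_ge0; [exact: ltW|rewrite subr_ge0].
have F3 : 0 <= u * (X + a * Y) ^+ 2 by apply: mulr_ge0; [exact: ltW|exact: sqr_ge0].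
have F4 : 0 <= u * a ^+ 2 * (1 - Y ^+ 2).
  by apply: mulr_ge0; [apply: mulr_ge0; [exact: ltW|exact: sqr_ge0]|rewrite subr_ge0].
nra.
Qed.

End ZPart.
Section ZPos.
Variable R : realType.

Lemma Z_pos n (P : 'rV[R]_n -> R) (L : R) (x : 'rV[R]_n) (a s2 : R) :
  0 < L -> (forall z, differentiable (fun y => ln (P y)) z) ->
  (forall z w, enorm (grad (fun y => ln (P y)) z - grad (fun y => ln (P y)) w)
     <= L * enorm (z - w)) ->
  0 < s2 -> L <= a ^+ 2 / (2 * s2) ->
  0 < fine (integral_Rd
     (fun y => (expR (ln (P y) - enorm2 (x - a *: y) / (2 * s2)))%:E)).
Proof.
move=> L0 fd lip s20 aL.
set f := fun y => ln (P y).
set u := (2 * s2)^-1.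
have u0 : 0 < u by rewrite invr_gt0 mulr_gt0.
have aLu : L <= a ^+ 2 * u by [].
set b := grad f 0.
have LB := log_bound L0 fd lip.
have Gsum (y : 'rV[R]_n) : enorm2 (x - a *: y) / (2 * s2) = \sum_i (x 0 i - a * y 0 i) ^+ 2 * u.
  by rewrite /enorm2 mulr_suml; apply: eq_bigr => i _; rewrite !mxE.
have fub (y : 'rV[R]_n) : f y <= f 0 + \sum_i (b 0 i * y 0 i + 3 / 4 * L * (y 0 i) ^+ 2).
  have := LB y; rewrite ler_norml => /andP[_ H].
  rewrite big_split /= -mulr_sumr.
  have -> : \sum_i b 0 i * y 0 i = \sum_i y 0 i * grad f 0 0 i.
    by apply: eq_bigr => i _; rewrite mulrC.
  move: H; rewrite /enorm2 /f; lra.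
have flb (y : 'rV[R]_n) : f 0 + \sum_i (b 0 i * y 0 i - 3 / 4 * L * (y 0 i) ^+ 2) <= f y.
  have := LB y; rewrite ler_norml => /andP[H _].
  rewrite big_split /= sumrN -mulr_sumr.
  have -> : \sum_i b 0 i * y 0 i = \sum_i y 0 i * grad f 0 0 i.
    by apply: eq_bigr => i _; rewrite mulrC.
  move: H; rewrite /enorm2 /f; lra.
set s := Num.sqrt (8 / L).
have s2E : s ^+ 2 = 8 / L by rewrite sqr_sqrtr // divr_ge0 // ltW.
have sn0 : s != 0 by rewrite sqrtr_eq0 -ltNge divr_gt0.
have pk0 : 0 < normal_peak s by exact: normal_peak_gt0.
set K := fun i : 'I_n => 4 * (b 0 i) ^+ 2 / L + 7 * (x 0 i) ^+ 2 * u.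
set C := expR (f 0 + \sum_i K i) / normal_peak s ^+ n.
have ub (y : 'rV[R]_n) : expR (f y - enorm2 (x - a *: y) / (2 * s2)) <=
    C * \prod_i normal_pdf 0 s (y 0 i).
  have E1 : \prod_i normal_pdf 0 s (y 0 i) =
      normal_peak s ^+ n * expR (\sum_i (- (L / 16) * (y 0 i) ^+ 2)).
    rewrite expR_sum normal_pdfE // big_split /= prodr_const card_ord; congr (_ * _).
    apply: eq_bigr => i _; rewrite /normal_fun subr0 s2E; congr expR.
    by field; rewrite gt_eqF.
  rewrite E1 /C mulrA divfK ?expf_neq0 ?gt_eqF// -expRD ler_expR Gsum.
  apply: (le_trans (lerB (fub y) (lexx _))).
  rewrite -addrA -sumrB -addrA -big_split /= lerD2l.
  apply: ler_sum => i _; rewrite /K.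
  have := per_ub (b 0 i) (y 0 i) (x 0 i) u0 L0 aLu; lra.
set Kl := fun i : 'I_n => - ((b 0 i) ^+ 2 + 1) / 2 - 3 / 4 * L - (2 * (x 0 i) ^+ 2 + 2 * a ^+ 2) * u.
set cl := expR (f 0 + \sum_i Kl i).
have lb (y : 'rV[R]_n) : (forall i, `|y 0 i| <= 1) -> cl <= expR (f y - enorm2 (x - a *: y) / (2 * s2)).
  move=> yb; rewrite /cl ler_expR Gsum.
  apply: le_trans (lerB (flb y) (lexx _)).
  rewrite -addrA -sumrB lerD2l.
  apply: ler_sum => i _; rewrite /Kl.
  exact: per_lb.
rewrite /integral_Rd.
set I := iint _.
have I0 : (0 <= I)%E by apply: iint_ge0 => t; rewrite lee_fin expR_ge0.
have Iub : (I <= C%:E)%E.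
  rewrite -(iint_prod n s C); apply: iint_le => t; first by rewrite lee_fin expR_ge0.
  rewrite lee_fin; apply: (le_trans (ub _)); rewrite big_tuple.
  rewrite le_eqVlt; apply/orP; left; apply/eqP.
  by congr (_ * _); apply: eq_bigr => i _; rewrite mxE.
have Ilb : ((cl * (2 * 1) ^+ n)%:E <= I)%E.
  apply: iint_lb.
  - exact: expR_ge0.
  - exact: ltr01.
  - by move=> t; rewrite lee_fin expR_ge0.
  move=> t tb; rewrite lee_fin; apply: lb => i; rewrite mxE; exact: tb.
have clp : 0 < cl * (2 * 1) ^+ n by rewrite mulr_gt0 ?expR_gt0 ?exprn_gt0.
move: I0 Iub Ilb; case: I => [r| |] //=.
by move=> _ _; rewrite lee_fin => H; exact: lt_le_trans clp H.
Qed.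

End ZPos.
Section Misc.
Variable R : realType.

Lemma derive_sub_cst n (f g : 'rV[R]_n -> R) (c : R) (y w : 'rV[R]_n) :
  derivable f y w -> derivable g y w ->
  derive (fun z => f z - g z - c) y w = derive f y w - derive g y w.
Proof.
move=> df dg; rewrite {1}/derive.
have E : (fun h : R => h^-1 *: (((fun z => f z - g z - c) \o shift y) (h *: w) - (f y - g y - c)))
  = (fun h : R => h^-1 *: ((f \o shift y) (h *: w) - f y) - h^-1 *: ((g \o shift y) (h *: w) - g y)).
  by apply: funext => h /=; rewrite -scalerBr; congr (_ *: _); ring.
rewrite E; apply: cvg_lim => //; apply: cvgB; [exact: df|exact: dg].
Qed.

Lemma quad_scalar n (m : R) (v : 'rV[R]_n) : quad_form (m%:M) v = m * enorm2 v.
Proof.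
rewrite /quad_form /enorm2 mulr_sumr; apply: eq_bigr => i _.
rewrite (bigD1 i) //= big1 ?addr0 => [|j ji]; rewrite !mxE.
  by rewrite eqxx mulr1n; ring.
by rewrite eq_sym (negbTE ji) mulr0n mulr0 mul0r.
Qed.

Lemma quad_opp n (A : 'M[R]_n) (v : 'rV[R]_n) : quad_form (- A) v = - quad_form A v.
Proof.
rewrite /quad_form -sumrN; apply: eq_bigr => i _; rewrite -sumrN.
by apply: eq_bigr => j _; rewrite !mxE; ring.
Qed.

End Misc.

Theorem lemma10 (R : realType) (d : nat) (pstar : 'rV[R]_d -> R) (L : R)
  (K : nat) (eta : R) (Rn : nat) :
  is_prob_density pstar ->
  0 < L ->
  (0 < K)%N ->
  0 < eta ->
  (0 < Rn)%N ->
  (1 / 2 * ln ((2 * L + 1) / (2 * L))) / eta = Rn%:R ->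
  (forall (k : nat) (t : R), (k < K)%N -> 0 <= t ->
     t <= 1 / 2 * ln ((2 * L + 1) / (2 * L)) ->
     grad_log_lipschitz
       (ou_density pstar (k%:R * (1 / 2 * ln ((2 * L + 1) / (2 * L))) + t)) L) ->
  forall (k r : nat), (k < K)%N -> (r < Rn)%N ->
  let S := 1 / 2 * ln ((2 * L + 1) / (2 * L)) in
  let tau := S - r%:R * eta in
  let mu_r := 1 / 2 * (expR (- (2 * tau)) / (1 - expR (- (2 * tau)))) in
  let L_r := 3 / 2 * (expR (- (2 * tau)) / (1 - expR (- (2 * tau)))) in
  forall x x' : 'rV[R]_d,
    differentiable
      (grad (fun y => ln (q_cond (ou_density pstar (k%:R * S)) tau x y))) x' ->
    loewner_le (mu_r%:M)
      (- hessian (fun y => ln (q_cond (ou_density pstar (k%:R * S)) tau x y)) x')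
    /\ loewner_le
      (- hessian (fun y => ln (q_cond (ou_density pstar (k%:R * S)) tau x y)) x')
      (L_r%:M).
Proof.
move=> hp L0 K0 eta0 Rn0 SE hlip k r kK rRn S tau mu_r L_r x x' dgrad.
have S0 : 0 < S.
  rewrite /S mulr_gt0 // ln_gt0 // ltr_pdivlMr ?mulr_gt0 // mul1r; lra.
have SRn : S = Rn%:R * eta.
  by rewrite -SE divfK ?gt_eqF.
have rR : r%:R + 1 <= Rn%:R :> R by rewrite natr1 ler_nat.
have reta : 0 <= r%:R * eta by rewrite mulr_ge0 ?ler0n ?ltW.
have tau0 : 0 < tau.
  rewrite /tau SRn.
  have := mulr_ge0 (ltW eta0) (_ : 0 <= Rn%:R - r%:R - 1 :> R); last by lra.
have tauS : tau <= S by rewrite /tau; lra.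
set E := expR (- (2 * tau)).
have E1 : E < 1 by rewrite /E expR_lt1; lra.
have E0 : 0 < E by exact: expR_gt0.
have ES : 2 * L / (2 * L + 1) <= E.
  have : expR (- (2 * S)) <= E by rewrite /E ler_expR; lra.
  suff -> : expR (- (2 * S)) = 2 * L / (2 * L + 1) by [].
  rewrite /S mulrA (_ : 2 * (1 / 2) = 1 :> R); last by field.
  rewrite mul1r expRN lnK ?posrE ?divr_gt0 ?mulr_gt0 ?addr_gt0 //.
  have h1 : 2 * L != 0 by rewrite mulf_neq0 ?gt_eqF.
  have h2 : 2 * L + 1 != 0 by rewrite gt_eqF // addr_gt0 ?mulr_gt0.
  by field; rewrite h2 gt_eqF.
  by rewrite mulr_gt0.
set a := expR (- tau).
have aE : a ^+ 2 = E by rewrite /a -expRM_natl mulrN.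
set s2 := 1 - E.
have s20 : 0 < s2 by rewrite /s2 subr_gt0.
set c := a ^+ 2 / s2.

have c2L : 2 * L <= c.
  rewrite /c aE ler_pdivlMr //.
  move: ES; rewrite ler_pdivrMr ?addr_gt0 ?mulr_gt0 // /s2; lra.
have aL : L <= a ^+ 2 / (2 * s2).
  have -> : a ^+ 2 / (2 * s2) = c / 2 by rewrite /c; field; rewrite gt_eqF.
  lra.
set P := ou_density pstar (k%:R * S).
have [Ppos [fd flip]] : grad_log_lipschitz P L.
  by have := hlip k 0 kK (lexx 0) (ltW S0); rewrite addr0.
set Z := fine (integral_Rd (fun y => (q_unnorm P tau x y)%:E)).
have Z0 : 0 < Z by exact: (Z_pos x L0 fd flip s20 aL).
pose f := fun y => ln (P y).
pose G := fun y => enorm2 (x - a *: y) / (2 * s2).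
have hfun : (fun y => ln (q_cond P tau x y)) = (fun y => f y - G y - ln Z).
  apply: funext => y; rewrite /q_cond -/Z lnM ?posrE ?expR_gt0 ?invr_gt0 //.
  by rewrite /q_unnorm expRK lnV ?posrE.
rewrite hfun in dgrad *.
set h := (fun y => f y - G y - ln Z) in dgrad *.
have dG z j : derive G z (@evec R d j) = - 2 * a * (x - a *: z) 0 j / (2 * s2).
  exact: (@derive_val _ _ _ _ _ _ _ (quad_derive x a (2 * s2) z j)).
have gh z j : grad h z 0 j = grad f z 0 j + a * (x - a *: z) 0 j / s2.
  rewrite [LHS]mxE /h derive_sub_cst; last 2 first.
  - exact: diff_derivable.
  - by case: (quad_derive x a (2 * s2) z j).
  rewrite dG !mxE. by field; rewrite gt_eqF.
have e0 v : 0 <= enorm2 v by exact: enorm2_ge0.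
have key v : - (L + c) * enorm2 v <= quad_form (hessian h x') v /\
             quad_form (hessian h x') v <= (L - c) * enorm2 v.
  have HQ := hess_quad (v := v) dgrad.
  have val t : t != 0 ->
    (\sum_j v 0 j * (t^-1 * (grad h (t *: v + x') 0 j - grad h x' 0 j))) =
    t^-1 * (\sum_j v 0 j * (grad f (t *: v + x') - grad f x') 0 j) - c * enorm2 v.
    move=> t0; rewrite /enorm2 mulr_sumr mulr_sumr -sumrB; apply: eq_bigr => j _.
    rewrite !gh; move: (grad f (t *: v + x')) (grad f x') => A B.
    by rewrite !mxE /c; field; rewrite t0 gt_eqF.
  have bnd t : t != 0 ->
    `|t^-1 * (\sum_j v 0 j * (grad f (t *: v + x') - grad f x') 0 j)| <= L * enorm2 v.
    move=> t0.
    have tp : 0 < `|t| by rewrite normr_gt0.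
    have := @dot_abs _ _ v (grad f (t *: v + x') - grad f x') (L * `|t|)
      (mulr_gt0 L0 tp).
    have hb : enorm (grad f (t *: v + x') - grad f x') <= L * `|t| * enorm v.
      by apply: le_trans (flip _ _) _; rewrite addrK enormZ mulrA.
    move=> /(_ hb).
    move: (\sum_j _) => X H.
    rewrite normrM normfV ler_pdivrMl ?normr_gt0 //.
    by rewrite mulrA [`|t| * L]mulrC.
  split.
    rewrite -(cvg_lim _ HQ) //; apply: limr_ge; first exact: cvgP HQ.
    near=> t.
    have t0 : t != 0 by near: t; exact: nbhs_dnbhs_neq.
    rewrite val //; have := bnd t t0; rewrite ler_norml => /andP[].
    move: (t^-1 * _) => X; lra.
  rewrite -(cvg_lim _ HQ) //; apply: limr_le; first exact: cvgP HQ.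
  near=> t.
  have t0 : t != 0 by near: t; exact: nbhs_dnbhs_neq.
  rewrite val //; have := bnd t t0; rewrite ler_norml => /andP[].
  move: (t^-1 * _) => X; lra.
have muE : mu_r = c / 2 by rewrite /mu_r /c aE /s2 /E; field; rewrite gt_eqF // subr_gt0.
have LrE : L_r = 3 * c / 2 by rewrite /L_r /c aE /s2 /E; field; rewrite gt_eqF // subr_gt0.
split => v; have [k1 k2] := key v; rewrite quad_scalar quad_opp.
  have cL : 0 <= c / 2 - L by lra.
  have F := mulr_ge0 cL (enorm2_ge0 v).
  move: (quad_form _ v) k1 k2 => q k1 k2.
  rewrite muE; lra.
have cL : 0 <= c / 2 - L by lra.
  have F := mulr_ge0 cL (enorm2_ge0 v).
move: (quad_form _ v) k1 k2 => q k1 k2.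
rewrite LrE; lra.
Unshelve. all: by end_near.
Qed.
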